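(* Let $D$ be an integer which is not a perfect square, let $A,B\in\mathbb{Z}$ be such that $S^{(D;A,B)}$ is smooth, and let $p\neq 2$ be a prime which is unramified in $\mathbb{Q}(\sqrt{D})/\mathbb{Q}$. Then there is a point $\mathbf{t}\in S^{(D;A,B)}(\mathbb{Q}_p)$ with $\mathrm{ev}_{\alpha,p}(\mathbf{t})=0$.
   Context: $S^{(D;A,B)}\subset\mathbb{P}^4_{\mathbb{Q}}$ is defined by $t_0t_1=t_2^2-Dt_3^2$ and $(t_0+At_1)(t_0+Bt_1)=t_2^2-Dt_4^2$; it is smooth iff $AB\neq0$, $A\neq B$, $A^2-2AB+B^2-2A-2B+1\neq 0$. For a smooth such surface, a place $l$ of $\mathbb{Q}$ and $\mathbf{t}\in S^{(D;A,B)}(\mathbb{Q}_l)$, at least one of the quotients $t_0/(t_0+At_1)$, $t_1/(t_0+At_1)$, $t_0/(t_0+Bt_1)$, $t_1/(t_0+Bt_1)$ is defined and nonzero at $\mathbf{t}$; for such a quotient $q$ one sets $\mathrm{ev}_{\alpha,l}(\mathbf{t})=0$ if the Hilbert symbol $(q,D)_l=1$ and $\mathrm{ev}_{\alpha,l}(\mathbf{t})=1/2$ if $(q,D)_l=-1$. This value is known to be independent of the choice of $q$ (it is the local evaluation of a Brauer class $\alpha\in\mathrm{Br}\,S^{(D;A,B)}$). *)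

(* Defs.v *)
(* Q_p is modelled concretely: Z_p = compatible sequences of
   integers (inverse limit of Z/p^k Z); points of P^4(Q_p) are represented by
   representatives in Z_p^5 (not all zero), as every point of P^4(Q_p) has one. *)
From mathcomp Require Import all_boot all_algebra.
Set Implicit Arguments. Unset Strict Implicit. Unset Printing Implicit Defensive.
Import GRing.Theory Num.Theory.
Local Open Scope ring_scope.

(* A sequence of integers x k, read as a residue mod p^k. *)
Definition zseq := nat -> int.

Definition is_zp (p : nat) (x : zseq) : Prop :=
  forall k : nat, (x k.+1 == x k %[mod (expn p k)%:Z])%Z.

Definition zp_eq (p : nat) (x y : zseq) : Prop :=
  forall k : nat, (x k == y k %[mod (expn p k)%:Z])%Z.

Definition zp_zero (p : nat) (x : zseq) : Prop := zp_eq p x (fun _ => 0).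

Definition zcst (c : int) : zseq := fun _ => c.
Definition zadd (x y : zseq) : zseq := fun k => x k + y k.
Definition zmul (x y : zseq) : zseq := fun k => x k * y k.

Definition on_S (p : nat) (D A B : int) (t0 t1 t2 t3 t4 : zseq) : Prop :=
  zp_eq p (fun k => t0 k * t1 k) (fun k => t2 k ^+ 2 - D * t3 k ^+ 2) /\
  zp_eq p (fun k => (t0 k + A * t1 k) * (t0 k + B * t1 k))
          (fun k => t2 k ^+ 2 - D * t4 k ^+ 2).

Definition S_point_Qp (p : nat) (D A B : int) (t0 t1 t2 t3 t4 : zseq) : Prop :=
  [/\ is_zp p t0, is_zp p t1, is_zp p t2, is_zp p t3 & is_zp p t4] /\
  ~ [/\ zp_zero p t0, zp_zero p t1, zp_zero p t2, zp_zero p t3 & zp_zero p t4] /\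
  on_S p D A B t0 t1 t2 t3 t4.

(* Hilbert symbol (f/g, b)_p = 1 for f, g, b in Z_p \ {0}: by definition,
   z^2 = (f/g) x^2 + b y^2 has a nontrivial solution in Q_p; after clearing the
   denominator g and scaling the solution into Z_p this reads
   g z^2 = f x^2 + g b y^2 with (x,y,z) in Z_p^3 not all zero. *)
Definition hilbert_quot_one (p : nat) (f g b : zseq) : Prop :=
  exists x y z : zseq,
    [/\ is_zp p x, is_zp p y & is_zp p z] /\
    ~ [/\ zp_zero p x, zp_zero p y & zp_zero p z] /\
    zp_eq p (fun k => g k * z k ^+ 2)
            (fun k => f k * x k ^+ 2 + g k * b k * y k ^+ 2).

(* ev_{alpha,p}(t) = 0: for one of the quotients q = f/g in
   t0/(t0+A t1), t1/(t0+A t1), t0/(t0+B t1), t1/(t0+B t1), which is defined and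
   nonzero at t (f(t) <> 0, g(t) <> 0), the Hilbert symbol (q, D)_p equals 1. *)
Definition ev_alpha_zero (p : nat) (D A B : int) (t0 t1 : zseq) : Prop :=
  let gA := zadd t0 (zmul (zcst A) t1) in
  let gB := zadd t0 (zmul (zcst B) t1) in
  exists f g : zseq,
    [\/ (f, g) = (t0, gA), (f, g) = (t1, gA), (f, g) = (t0, gB) | (f, g) = (t1, gB)] /\
    ~ zp_zero p f /\ ~ zp_zero p g /\ hilbert_quot_one p f g (zcst D).

Definition S_smooth (A B : int) : Prop :=
  [/\ A * B != 0, A != B & A ^+ 2 - 2 * A * B + B ^+ 2 - 2 * A - 2 * B + 1 != 0].

Definition is_square_int (D : int) : Prop := exists m : int, D = m ^+ 2.

(* squarefree part d of D (D = d m^2, d squarefree), so Q(sqrt D) = Q(sqrt d) *)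
Definition sqfree_part (D : int) : int :=
  Num.sg D * (\prod_(q <- primes `|D|%N | odd (logn q `|D|%N)) q)%N%:Z.

Definition quad_disc (D : int) : int :=
  let d := sqfree_part D in if (d %% 4)%Z == 1 then d else 4 * d.

(* p is unramified in Q(sqrt D)/Q iff p does not divide the discriminant *)
Definition unramified_QsqrtD (p : nat) (D : int) : Prop :=
  ~~ ((p%:Z) %| quad_disc D)%Z.

(* Main.v *)
Require Import Defs.
From mathcomp Require Import all_boot all_algebra.
From mathcomp Require Import ring zify.
Set Implicit Arguments. Unset Strict Implicit. Unset Printing Implicit Defensive.
Import GRing.Theory Num.Theory.
Local Open Scope ring_scope.
Lemma prime_coprimez (p : nat) (n : int) : prime p -> ~~ (p%:Z %| n)%Z -> coprimez p%:Z n.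
Proof. by move=> pp h; rewrite coprimezE /= prime_coprime. Qed.

Lemma lift_step (p : nat) (a M x : int) (k : nat) : prime p -> (0 < k)%N ->
  ~~ (p%:Z %| 2*a*x)%Z -> ((expn p k)%:Z %| a*x^+2 - M)%Z ->
  exists t : int, ((expn p k.+1)%:Z %| a*(x + t * (expn p k)%:Z)^+2 - M)%Z.
Proof.
move=> pp k0 hu hd.
have [c hc] : exists c : int, a*x^+2 - M = c * (expn p k)%:Z by apply/dvdzP.
have [u [v huv]] : exists u v : int, u * p%:Z + v * (2*a*x) = 1.
  by have /coprimezP [[u v] /= huv] := prime_coprimez pp hu; exists u, v.
have e1 : a * (x + - c * v * (expn p k)%:Z) ^+ 2 - M =
   (expn p k)%:Z * (c * (u * p%:Z)) + a * (c*v)^+2 * ((expn p k)%:Z * (expn p k)%:Z).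
  have -> : a * (x + - c * v * (expn p k)%:Z) ^+ 2 - M = (a * x ^+ 2 - M) - (expn p k)%:Z * c * (v * (2 * a * x)) + a * (c*v)^+2 * ((expn p k)%:Z * (expn p k)%:Z) by ring.
  rewrite hc; have -> : v * (2 * a * x) = 1 - u * p%:Z by apply/eqP; rewrite eq_sym subr_eq addrC huv.
  ring.
exists (- c * v); rewrite e1 expnS PoszM; apply: rpredD.
  rewrite (_ : (expn p k)%:Z * (c * (u * p%:Z)) = (c * u * p%:Z) * (expn p k)%:Z); last by ring.
  by apply: dvdz_mul => //; apply: dvdz_mull.
apply: dvdz_mull; rewrite mulrC; apply: dvdz_mul => //.
by case: k {hd hc e1} k0 => // k _; rewrite expnS PoszM dvdz_mulr.
Qed.

Definition inv_h (p : nat) (a : int) (m : zseq) (r0 : int) (k : nat) (x : int) : bool :=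
  (p%:Z %| x - r0)%Z && ((expn p k)%:Z %| a * x^+2 - m k)%Z.

Lemma step_ex (p : nat) (a : int) (m : zseq) (r0 : int) :
  prime p -> is_zp p m -> ~~ (p%:Z %| 2*a*r0)%Z -> (p%:Z %| a*r0^+2 - m 1%N)%Z ->
  forall k x, inv_h p a m r0 k x ->
  exists y, ((expn p k)%:Z %| y - x)%Z && inv_h p a m r0 k.+1 y.
Proof.
move=> pp hm hu h1 [|k] x /andP [hx1 hx2].
  by exists r0; rewrite /inv_h expn0 expn1 dvd1z subrr dvdz0 h1.
have hk : ((expn p k.+1)%:Z %| a * x^+2 - m k.+2)%Z.
  have := hm k.+1; rewrite eqz_mod_dvd => hmk.
  rewrite (_ : a * x ^+ 2 - m k.+2 = (a * x ^+ 2 - m k.+1) - (m k.+2 - m k.+1)); last by ring.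
  by apply: rpredB.
have hux : ~~ (p%:Z %| 2*a*x)%Z.
  apply: contra hu => h.
  rewrite (_ : 2*a*r0 = 2*a*x - 2*a*(x - r0)); last by ring.
  by apply: rpredB => //; apply: dvdz_mull.
have [t ht] := lift_step pp (ltn0Sn k) hux hk.
exists (x + t * (expn p k.+1)%:Z); apply/andP; split.
  by rewrite addrAC subrr add0r; apply: dvdz_mull.
apply/andP; split => //.
rewrite (_ : x + t * (expn p k.+1)%:Z - r0 = (x - r0) + t * (expn p k.+1)%:Z); last by ring.
by apply: rpredD => //; apply: dvdz_mull; rewrite expnS PoszM dvdz_mulr.
Qed.

Lemma inv_h0 p a m r0 : inv_h p a m r0 0 r0.
Proof. by rewrite /inv_h subrr dvdz0 expn0 dvd1z. Qed.

Fixpoint hseq (p : nat) (a : int) (m : zseq) (r0 : int)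
  (H : forall k x, inv_h p a m r0 k x -> exists y, ((expn p k)%:Z %| y - x)%Z && inv_h p a m r0 k.+1 y)
  (k : nat) : {x : int | inv_h p a m r0 k x} :=
  match k with
  | 0 => exist _ r0 (inv_h0 p a m r0)
  | k'.+1 => let: exist x hx := hseq H k' in
             exist _ (xchoose (H k' x hx)) (proj2 (andP (xchooseP (H k' x hx))))
  end.

Lemma hensel (p : nat) (a : int) (m : zseq) (r0 : int) :
  prime p -> is_zp p m -> ~~ (p%:Z %| 2*a*r0)%Z -> (p%:Z %| a*r0^+2 - m 1%N)%Z ->
  exists s : zseq, is_zp p s /\ (forall k, ((expn p k)%:Z %| a * s k ^+ 2 - m k)%Z)
     /\ (forall k, (p%:Z %| s k - r0)%Z).
Proof.
move=> pp hm hu h1.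
pose H := step_ex pp hm hu h1.
exists (fun k => sval (hseq H k)); split; [|split].
- move=> k; rewrite eqz_mod_dvd /=.
  case E: (hseq H k) => [x hx] /=.
  exact: (proj1 (andP (xchooseP (H k x hx)))).
- by move=> k; have /andP [] := svalP (hseq H k).
- by move=> k; have /andP [] := svalP (hseq H k).
Qed.

Lemma zp_eqP (p : nat) (x y : zseq) :
  (forall k, ((expn p k)%:Z %| x k - y k)%Z) -> zp_eq p x y.
Proof. by move=> h k; rewrite eqz_mod_dvd. Qed.

Lemma is_zpP (p : nat) (x : zseq) :
  (forall k, ((expn p k)%:Z %| x k.+1 - x k)%Z) -> is_zp p x.
Proof. by move=> h k; rewrite eqz_mod_dvd. Qed.

Lemma is_zpE (p : nat) (x : zseq) k : is_zp p x -> ((expn p k)%:Z %| x k.+1 - x k)%Z.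
Proof. by move=> h; rewrite -eqz_mod_dvd. Qed.

Lemma is_zp_cst (p : nat) (c : int) : is_zp p (zcst c).
Proof. by apply: is_zpP => k; rewrite /zcst subrr dvdz0. Qed.

Lemma is_zp_add (p : nat) (x y : zseq) : is_zp p x -> is_zp p y -> is_zp p (zadd x y).
Proof.
move=> hx hy; apply: is_zpP => k; rewrite /zadd.
rewrite (_ : x k.+1 + y k.+1 - (x k + y k) = (x k.+1 - x k) + (y k.+1 - y k)); last by ring.
by apply: rpredD; apply: is_zpE.
Qed.

Lemma is_zp_mul (p : nat) (x y : zseq) : is_zp p x -> is_zp p y -> is_zp p (zmul x y).
Proof.
move=> hx hy; apply: is_zpP => k; rewrite /zmul.
rewrite (_ : x k.+1 * y k.+1 - x k * y k = x k.+1 * (y k.+1 - y k) + (x k.+1 - x k) * y k); last by ring.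
by apply: rpredD; [apply: dvdz_mull | apply: dvdz_mulr]; apply: is_zpE.
Qed.

Lemma is_zp_ext (p : nat) (x y : zseq) : (forall k, x k = y k) -> is_zp p x -> is_zp p y.
Proof. by move=> e h k; rewrite -!e. Qed.

Lemma nz_cst (p : nat) (x : zseq) (n : int) : prime p -> (forall k, x k = n) -> n != 0 ->
  ~ zp_zero p x.
Proof.
move=> pp ex n0 hz; have := hz `|n|%N; rewrite ex eqz_mod_dvd subr0 dvdzE /= => h.
have := dvdn_leq _ h; rewrite absz_gt0 n0 => /(_ isT).
by rewrite leqNgt ltn_expl // prime_gt1.
Qed.

Lemma nz_scaled (p e : nat) (u x : zseq) : prime p ->
  (forall k, x k = (expn p e)%:Z * u k) -> (forall k, ~~ (p%:Z %| u k)%Z) -> ~ zp_zero p x.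
Proof.
move=> pp ex hu hz; have := hz e.+1; rewrite ex eqz_mod_dvd subr0 expnSr PoszM.
rewrite dvdz_mul2l ?(negbTE (hu _)) //.
by rewrite -[0]/(0%N%:Z) eqz_nat -lt0n expn_gt0 prime_gt0.
Qed.
Lemma F_inter (F : finFieldType) (X Y : {set F}) : (#|F| < #|X| + #|Y|)%N ->
  exists x, (x \in X) && (x \in Y).
Proof.
move=> h; have hu : (#|X :|: Y| <= #|F|)%N := max_card _.
rewrite cardsU in hu.
have : (0 < #|X :&: Y|)%N by lia.
by case/card_gt0P => x; rewrite inE => hx; exists x.
Qed.

Definition secf (F : finType) (g : F -> F) (A : {set F}) (y : F) : F :=
  if [pick x in A | g x == y] is Some x then x else y.

Lemma secfP (F : finType) (g : F -> F) (A : {set F}) y : y \in g @: A ->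
  secf g A y \in A /\ g (secf g A y) = y.
Proof.
case/imsetP => x xA ->; rewrite /secf; case: pickP => [z /andP [zA /eqP]|] //.
by move/(_ x); rewrite xA eqxx.
Qed.

Lemma fiber2 (F : finFieldType) (g : F -> F) (A : {set F}) :
  {in A &, forall x y, g x = g y -> y = x \/ y = - x} ->
  forall b : bool, (b -> 0 \in A) ->
  (#|A| + b <= 2 * #|g @: A|)%N.
Proof.
move=> hg b hb0.
pose B := secf g A @: (g @: A).
have hB : (#|B| <= #|g @: A|)%N by apply: leq_imset_card.
have hnB : #|[set - x | x in B]| = #|B| by apply: card_imset; exact: oppr_inj.
have key : forall x, x \in A -> (secf g A (g x) = x) \/ (secf g A (g x) = - x).
  move=> x xA; have [sA gs] := secfP (imset_f g xA).
  by apply: hg.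
have inB : forall x, x \in A -> secf g A (g x) \in B.
  by move=> x xA; apply: imset_f; apply: imset_f.
have hsub : A \subset B :|: [set - x | x in B].
  apply/subsetP => x xA; rewrite inE; case: (key x xA) => e.
    by rewrite -e inB.
  by apply/orP; right; apply/imsetP; exists (secf g A (g x)); rewrite ?inB // e opprK.
have h1 := subset_leq_card hsub; rewrite cardsU hnB in h1.
case: b hb0 => [/(_ isT) h0|_]; last first.
  clearbody B; rewrite addn0; set a := #|A| in h1 *; set G := #|[set g x | x in A]| in hB *.
  set b := #|B| in h1; set b' := #|B| in hB; have eb : b = b' := erefl.
  clearbody a G b b'; lia.
have : (0 < #|B :&: [set - x | x in B]|)%N.
  apply/card_gt0P; exists 0; rewrite inE; have := inB 0 h0.
  case: (key 0 h0) => e; rewrite e ?oppr0 => h; rewrite h /=;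
  by apply/imsetP; exists 0; rewrite ?oppr0.
move=> hpos; have hcb := subset_leq_card (subsetIl B [set - x | x in B]).
clearbody B; rewrite /= addn1.
set a := #|A| in h1 *; set G := #|[set g x | x in A]| in hB *.
set c := #|B :&: _| in h1; set c' := #|B :&: _| in hpos; set c'' := #|B :&: _| in hcb.
have ec : c = c' := erefl. have ec' : c = c'' := erefl.
set b := #|B| in h1; set b' := #|B| in hB; set b'' := #|B| in hcb.
have eb : b = b' := erefl. have eb' : b = b'' := erefl.
clearbody a G b b' b'' c c' c''; lia.
Qed.

Lemma pair_bound (F : finType) (g s : F -> F) (A : {set F}) :
  (forall x, s (s x) = x) -> {in A, forall x, s x \in A} ->
  {in A, forall x, s x != x} -> {in A, forall x, g (s x) = g x} ->
  (2 * #|g @: A| <= #|A|)%N.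
Proof.
move=> hss hsA hfix hgs.
pose B := secf g A @: (g @: A).
have hBc : #|B| = #|g @: A|.
  apply: card_in_imset => y1 y2 h1 h2 e.
  by have [_ <-] := secfP h1; have [_ <-] := secfP h2; rewrite e.
have hBA : B \subset A by apply/subsetP => x /imsetP [y hy ->]; have [] := secfP hy.
have hsB : #|s @: B| = #|B| by apply: card_imset; exact: (can_inj hss).
have hsBA : s @: B \subset A.
  by apply/subsetP => x /imsetP [z zB ->]; apply: hsA; apply: (subsetP hBA).
have hdis : [disjoint B & s @: B].
  apply/pred0P => x /=; apply/negP => /andP [xB /imsetP [z zB ez]].
  move: xB zB ez => /imsetP [y hy ->] /imsetP [y' hy' ->] e.
  have [sA gs] := secfP hy; have [sA' gs'] := secfP hy'.
  have eyy : y = y' by rewrite -gs e hgs.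
  by subst y'; move: (hfix _ sA'); rewrite -e eqxx.
have hU : B :|: s @: B \subset A by rewrite subUset hBA hsBA.
have := subset_leq_card hU.
rewrite (cardsU B (s @: B)).
move: hdis; rewrite -setI_eq0 => /eqP ->; rewrite cards0 subn0 hsB hBc.
by rewrite mul2n -addnn.
Qed.

Lemma sq_fib (F : finFieldType) (a b : F) (A : {set F}) : b != 0 ->
  {in A &, forall x y, a + b * x ^+ 2 = a + b * y ^+ 2 -> y = x \/ y = - x}.
Proof.
move=> hb x y _ _ /addrI /(mulfI hb) /eqP; rewrite eqf_sqr => /orP [] /eqP ->; by [left|right; rewrite opprK].
Qed.

Lemma sq_count (F : finFieldType) (a b : F) : b != 0 ->
  (#|F| < 2 * #|[set (a + b * x ^+ 2)%R | x in [set: F]]|)%N.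
Proof.
move=> hb.
have := @fiber2 F (fun x => a + b * x ^+ 2) [set: F] (@sq_fib F _ _ _ hb) true (fun _ => in_setT 0).
by rewrite cardsT addn1.
Qed.

Lemma sq_count_nz (F : finFieldType) (a b : F) : b != 0 ->
  (#|F| <= (2 * #|[set (a + b * x ^+ 2)%R | x in [set~ 0%R]]|).+1)%N.
Proof.
move=> hb.
have := @fiber2 F (fun x => a + b * x ^+ 2) [set~ 0] (@sq_fib F _ _ _ hb) false (fun h => False_ind _ (notF h)).
rewrite cardsC1 addn0 => h.
rewrite -ltnS in h; exact: leq_trans (leqSpred _) h.
Qed.

Lemma rep2 (F : finFieldType) (a b c d : F) : b != 0 -> d != 0 ->
  exists x y, a + b * x ^+ 2 = c + d * y ^+ 2.
Proof.
move=> hb hd.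
have h1 := sq_count a hb; have h2 := sq_count c hd.
have [z /andP [/imsetP [x _ ->] /imsetP [y _ e]]] :
   exists z, (z \in [set (a + b * x ^+ 2)%R | x in [set: F]]) && (z \in [set (c + d * x ^+ 2)%R | x in [set: F]]).
  apply: F_inter; have aux : forall n a b : nat, (n < 2*a -> n < 2*b -> n < a + b)%N by move=> *; lia.
  exact: aux h1 h2.
by exists x, y.
Qed.

Lemma dichot (F : finFieldType) (D y : F) : (forall x, x ^+ 2 != D) -> y != 0 ->
  (exists v, y = v ^+ 2) \/ (exists v, y = D * v ^+ 2).
Proof.
move=> hD hy.
have D0 : D != 0 by apply/eqP => e; move: (hD 0); rewrite e exprS mul0r eqxx.
case: (boolP [exists v, y == v ^+ 2]) => [/existsP [v /eqP hv]|h1]; first by left; exists v.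
case: (boolP [exists v, y == D * v ^+ 2]) => [/existsP [v /eqP hv]|h2]; first by right; exists v.
exfalso.
pose Q := [set (0 + 1 * x ^+ 2)%R | x in [set~ (0:F)]].
pose DQ := [set (0 + D * x ^+ 2)%R | x in [set~ (0:F)]].
have hQ := @sq_count_nz F 0 1 (oner_neq0 _).
have hDQ := @sq_count_nz F 0 D D0.
have hdis : Q :&: DQ = set0.
  apply/setP => z; rewrite !inE; apply/negP => /andP [/imsetP [x hx ->] /imsetP [w hw e]].
  move: hx hw; rewrite !inE => hx hw.
  move: (hD (x / w)); rewrite expr_div_n add0r mul1r add0r in e *; rewrite e mulfK ?eqxx //.
  by rewrite expf_neq0.
have hsub : Q :|: DQ \subset ~: [set 0; y].
  apply/subsetP => z; rewrite !inE => /orP [] /imsetP [x hx ->]; move: hx; rewrite !inE => hx;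
  rewrite add0r ?mul1r; apply/norP; split.
  - by rewrite expf_neq0.
  - by apply/eqP => e; move: h1 => /existsP; apply; exists x; rewrite e.
  - by rewrite mulf_neq0 ?expf_neq0.
  - by apply/eqP => e; move: h2 => /existsP; apply; exists x; rewrite e.
have h3 := subset_leq_card hsub.
rewrite cardsU hdis cards0 subn0 in h3.
have hc := cardsC [set 0; y]; rewrite cards2 eq_sym hy /= in hc.
have aux : forall f q d c : nat, (q + d <= c -> 2 + c = f -> f <= (2*q).+1 -> f <= (2*d).+1 -> False)%N.
  by move=> *; lia.
exact: aux h3 hc hQ hDQ.
Qed.

Lemma mainF (F : finFieldType) (D S m : F) : (2:F) != 0 -> (forall x, x ^+ 2 != D) -> m != 0 ->
  (exists z, S ^+ 2 - m = z ^+ 2) ->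
  exists a w, a != 0 /\ (S + D * a ^+ 2) ^+ 2 - m = D * w ^+ 2.
Proof.
move=> h2 hD hm [z hz].
have D0 : D != 0 by apply/eqP => e; move: (hD 0); rewrite e exprS mul0r eqxx.
case: (boolP [exists a, [exists w, (a != 0) && ((S + D * a^+2)^+2 - m == D * w^+2)]]).
  by case/existsP => a /existsP [w /andP [ha /eqP e]]; exists a, w.
move=> H.
have H' : forall a w, a != 0 -> (S + D * a^+2)^+2 - m != D * w^+2.
  move=> a w ha; apply/negP => e; move: H => /existsP; apply; exists a; apply/existsP; exists w.
  by rewrite ha e.
pose X := [set (S + D * x ^+ 2)%R | x in [set~ (0:F)]].
pose A := [set x : F | (x != 0) && (x ^+ 2 != m)].
pose g := fun x : F => (x + m / x) / 2.
pose s := fun x : F => m / x.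
have hss : forall x, s (s x) = x.
  move=> x; rewrite /s; case: (eqVneq x 0) => [->|hx]; first by rewrite invr0 !mulr0 invr0 mulr0.
  by rewrite invf_div mulrCA mulfV // mulr1.
have hsA : {in A, forall x, s x \in A}.
  move=> x; rewrite !inE /s => /andP [hx hx2]; rewrite mulf_neq0 ?invr_neq0 //=.
  apply: contra hx2 => /eqP e; apply/eqP.
  have : m ^+ 2 / x ^+ 2 = m by rewrite -expr_div_n.
  move/(congr1 (fun t => t * x ^+ 2)); rewrite divfK ?expf_neq0 // expr2.
  by move/(mulfI hm).
have hfix : {in A, forall x, s x != x}.
  move=> x; rewrite !inE /s => /andP [hx hx2]; apply: contra hx2 => /eqP e.
  by rewrite expr2 -{1}e divfK.
have hgs : {in A, forall x, g (s x) = g x} by move=> x _; rewrite /g; have := hss x; rewrite /s => ->; rewrite addrC.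
have hpair := pair_bound hss hsA hfix hgs.
have hX := sq_count_nz S D0.
have inG : forall u v, u ^+ 2 - m = v ^+ 2 -> v != 0 -> u \in g @: A.
  move=> u v e hv.
  have hm' : m = (u - v) * (u + v).
    have -> : (u - v) * (u + v) = u ^+ 2 - v ^+ 2 by ring.
    by rewrite -e; ring.
  have hx : u - v != 0.
    by apply: contra hm => /eqP h; rewrite hm' h mul0r.
  apply/imsetP; exists (u - v).
    rewrite inE hx /=; apply: contra hv => /eqP h.
    have e1 : u - v = u + v by apply: (mulfI hx); rewrite -expr2 h.
    have e2 : 2 * v = (u + v) - (u - v) by ring.
    by move: e2; rewrite e1 subrr => /eqP; rewrite mulf_eq0 (negbTE h2).
  by rewrite /g hm'; field; rewrite h2 hx.
have XsubG : X \subset g @: A.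
  apply/subsetP => u /imsetP [a ha ->]; rewrite !inE in ha.
  have hn : (S + D * a ^+ 2) ^+ 2 - m != 0.
    by have := H' a 0 ha; rewrite [(0:F) ^+ 2]expr2 !mulr0.
  case: (dichot hD hn) => [[v hv]|[v hv]]; last by move: (H' a v ha); rewrite hv eqxx.
  apply: (inG _ _ hv); apply: contra hn => /eqP hv0; by rewrite hv hv0 expr2 mulr0.
have SnX : S \notin X.
  apply/imsetP => [[a ha e]]; rewrite !inE in ha.
  have : D * a ^+ 2 == 0 by apply/eqP; apply: (addrI S); rewrite addr0 -e.
  by rewrite mulf_eq0 (negbTE D0) expf_eq0 /= (negbTE ha).
have A0 : A \subset [set~ 0] by apply/subsetP => x; rewrite !inE => /andP [].
case: (eqVneq (S ^+ 2) m) => hSm.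
  have S0 : S != 0 by apply: contra hm => /eqP h; rewrite -hSm h expr2 mulr0.
  have hA3 : A \subset ~: [set 0; S; - S].
    apply/subsetP => x; rewrite !inE => /andP [hx hx2]; rewrite (negbTE hx) /=.
    apply/norP; split; apply: contra hx2 => /eqP ->; by rewrite ?sqrrN hSm.
  have hc3 : #|[set 0; S; - S]| = 3%N.
    rewrite setUC cardsU1 cards2 !inE.
    have h1 : (0 != S) by rewrite eq_sym.
    have h1' : (- S == 0) = false by apply/negbTE; rewrite oppr_eq0.
    have h3 : (- S == S) = false.
      apply/negbTE; apply: contra h2 => /eqP e.
      have : 2 * S = 0 by rewrite -[X in X * S]/(1 + 1) mulrDl mul1r -{1}e addNr.
      by move/eqP; rewrite mulf_eq0 (negbTE S0) orbF.
    by rewrite h1 h1' h3.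
  have c1 := subset_leq_card XsubG.
  have c2 := subset_leq_card hA3; have c3 := cardsC [set 0; S; - S]; rewrite hc3 in c3.
  have aux : forall f x ga a c : nat, (f <= (2*x).+1 -> 2 * ga <= a -> x <= ga -> a <= c -> 3 + c = f -> False)%N.
    by move=> *; lia.
  exfalso; exact: aux hX hpair c1 c2 c3.
have z0 : z != 0 by apply: contra hSm => /eqP h; rewrite -subr_eq0 hz h expr2 mulr0.
have SG : S \in g @: A by apply: inG hz z0.
have XsubG' : X \subset (g @: A) :\ S.
  apply/subsetP => u hu; rewrite !inE (subsetP XsubG _ hu) andbT.
  by apply: contra SnX => /eqP <-.
have c1 := subset_leq_card XsubG'; have c4 := cardsD1 S (g @: A); rewrite SG in c4.
have c2 := subset_leq_card A0; rewrite cardsC1 in c2.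
have aux : forall f x ga gd a : nat, (f <= (2*x).+1 -> 2 * ga <= a -> x <= gd -> ga = 1 + gd -> a <= f.-1 -> False)%N.
  by move=> *; lia.
exfalso; exact: aux hX hpair c1 c4 c2.
Qed.

Lemma card3 (F : finFieldType) (D : F) : #|F| = 3%N -> (2:F) != 0 -> D != 0 ->
  (exists x, x ^+ 2 = D) \/ (exists x, x ^+ 2 = - D).
Proof.
move=> h3 h2 hD.
case: (eqVneq D 1) => [->|h1]; first by left; exists 1; rewrite expr1n.
case: (eqVneq D (-1)) => [->|h1']; first by right; exists 1; rewrite expr1n opprK.
exfalso.
have hc := max_card (mem (D |: [set 0; 1; -1])).
rewrite cardsU1 setUC cardsU1 cards2 !inE in hc.
have e10 : (0 == (1:F)) = false by rewrite eq_sym oner_eq0.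
have e1n : (-1 == (1:F)) = false.
  apply/negbTE; apply: contra h2 => /eqP e.
  by rewrite -[2]/(1 + 1 : F) -{1}e addNr.
have en0 : (-1 == (0:F)) = false by rewrite oppr_eq0 oner_eq0.
rewrite (negbTE hD) (negbTE h1) (negbTE h1') e10 e1n en0 /= in hc.
have aux : forall n : nat, (1 + (1+2) <= n -> n = 3 -> False)%N by move=> *; lia.
exact: aux hc h3.
Qed.

Lemma avoid3 (F : finFieldType) (a b c : F) : (3 < #|F|)%N -> exists x, [&& x != a, x != b & x != c].
Proof.
move=> h.
have : (0 < #|~: [set a; b; c]|)%N.
  have hC := cardsC [set a; b; c]; have hU := cardsU [set a; b] [set c].
  rewrite cards2 cards1 in hU.
  have aux : forall f s u i n : nat, (3 < f -> s + n = f -> s = (u.+1) + 1 - i -> u <= 1 -> 0 < n)%N.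
    by move=> *; lia.
  by apply: aux h hC hU (leq_b1 _).
case/card_gt0P => x; rewrite !inE => hx; exists x.
by move: hx; rewrite !negb_or -andbA.
Qed.

Definition phi (p : nat) (z : int) : 'F_p := z%:~R.

Lemma phi_eq (p : nat) (a b : int) : prime p -> (phi p a == phi p b) = (p%:Z %| a - b)%Z.
Proof.
move=> pp; rewrite (dvdz_pcharf (pchar_Fp pp)) /phi rmorphB /= subr_eq0.
by [].
Qed.

Lemma phi0 (p : nat) (a : int) : prime p -> (phi p a == 0) = (p%:Z %| a)%Z.
Proof. by move=> pp; rewrite (dvdz_pcharf (pchar_Fp pp)). Qed.

Lemma phi_surj (p : nat) (y : 'F_p) : exists z, phi p z = y.
Proof. by exists (nat_of_ord y)%:Z; rewrite /phi -pmulrn natr_Zp. Qed.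

Lemma phiD p a b : phi p (a + b) = phi p a + phi p b. Proof. exact: rmorphD. Qed.
Lemma phiM p a b : phi p (a * b) = phi p a * phi p b. Proof. exact: rmorphM. Qed.
Lemma phiB p a b : phi p (a - b) = phi p a - phi p b. Proof. exact: rmorphB. Qed.
Lemma phiN p a : phi p (- a) = - phi p a. Proof. exact: rmorphN. Qed.
Lemma phiX p a n : phi p (a ^+ n) = phi p a ^+ n. Proof. exact: rmorphXn. Qed.
Lemma phi1 p : phi p 1 = 1. Proof. exact: rmorph1. Qed.
Lemma phi2 p : phi p 2 = 2. Proof. by rewrite /phi. Qed.

Definition GOAL (p : nat) (D A B : int) : Prop :=
  exists t0 t1 t2 t3 t4 : zseq,
    S_point_Qp p D A B t0 t1 t2 t3 t4 /\ ev_alpha_zero p D A B t0 t1.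

Lemma case1 (p e : nat) (D A B D' : int) (d : zseq) : prime p -> A != 0 -> D != 0 ->
  D = (expn p e)%:Z ^+ 2 * D' -> is_zp p d -> (forall k, ((expn p k)%:Z %| d k ^+ 2 - D')%Z) ->
  GOAL p D A B.
Proof.
move=> pp A0 D0 eD hd hdk.
set E := (expn p e)%:Z.
pose Dl := zmul (zcst E) d.
have hDl : forall k, ((expn p k)%:Z %| Dl k ^+ 2 - D)%Z.
  move=> k; rewrite /Dl /zmul /zcst eD.
  rewrite (_ : (E * d k) ^+ 2 - E ^+ 2 * D' = E ^+ 2 * (d k ^+ 2 - D')); last by ring.
  exact: dvdz_mull.
have iDl : is_zp p Dl by apply: is_zp_mul; [apply: is_zp_cst|].
set X1 := 4 * A * B * D + 1.
set X2 := 4 * A * B * D - 1.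
have nzt1 : ~ zp_zero p (zcst (4 * D)).
  apply: (nz_cst pp (n := 4 * D)) => //; rewrite mulf_neq0 //.
have nzg : ~ zp_zero p (zadd (zcst 0) (zmul (zcst A) (zcst (4 * D)))).
  apply: (nz_cst pp (n := A * (4 * D))); first by move=> k; rewrite /zadd /zmul /zcst add0r.
  by rewrite !mulf_neq0.
exists (zcst 0), (zcst (4 * D)), (zmul Dl (zcst X1)), (zcst X1), (zcst X2).
split; [split; [|split]|].
- by split; repeat apply: is_zp_mul; rewrite ?is_zp_cst.
- by case.
- split; apply: zp_eqP => k; rewrite /zmul /zcst.
  + rewrite (_ : 0 * (4 * D) - ((Dl k * X1) ^+ 2 - D * X1 ^+ 2) = - X1 ^+ 2 * (Dl k ^+ 2 - D)); last by ring.
    exact: dvdz_mull.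
  + rewrite (_ : (0 + A * (4 * D)) * (0 + B * (4 * D)) - ((Dl k * X1) ^+ 2 - D * X2 ^+ 2)
        = - X1 ^+ 2 * (Dl k ^+ 2 - D)); last by rewrite /X1 /X2; ring.
    exact: dvdz_mull.
- exists (zcst (4 * D)), (zadd (zcst 0) (zmul (zcst A) (zcst (4 * D)))).
  split; first by constructor 2.
  split => //; split => //.
  exists (zcst 0), (zcst 1), Dl; split; first by split; rewrite ?is_zp_cst.
  split.
    case=> _ h1 _; apply: (nz_cst pp (n := 1)) h1 => //.
  apply: zp_eqP => k; rewrite /zadd /zmul /zcst.
  rewrite (_ : (0 + A * (4 * D)) * Dl k ^+ 2 - (4 * D * 0 ^+ 2 + (0 + A * (4 * D)) * D * 1 ^+ 2)
     = (A * (4 * D)) * (Dl k ^+ 2 - D)); last by ring.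
  exact: dvdz_mull.
Qed.

Lemma case2 (p e : nat) (D A B D' : int) (r : zseq) : prime p ->
  D = (expn p e)%:Z ^+ 2 * D' -> is_zp p r -> (forall k, ((expn p k)%:Z %| r k ^+ 2 - - D')%Z) ->
  (forall k, ~~ (p%:Z %| r k)%Z) ->
  GOAL p D A B.
Proof.
move=> pp eD hr hrk hru.
set E := (expn p e)%:Z.
pose t0 := zmul (zcst E) r.
have nz0 : ~ zp_zero p t0 by apply: (nz_scaled (e := e) (u := r) pp).
have nzg : ~ zp_zero p (zadd t0 (zmul (zcst A) (zcst 0))).
  by apply: (nz_scaled (e := e) (u := r) pp) => // k; rewrite /zadd /zmul /zcst /t0 /zmul mulr0 addr0.
exists t0, (zcst 0), (zcst 0), (zcst 0), (zcst 1).
split; [split; [|split]|].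
- by split; rewrite /t0 ?is_zp_cst //; apply: is_zp_mul; rewrite ?is_zp_cst.
- by case.
- split; apply: zp_eqP => k; rewrite /t0 /zmul /zcst.
  + by rewrite (_ : E * r k * 0 - (0 ^+ 2 - D * 0 ^+ 2) = 0) ?dvdz0 //; ring.
  + rewrite eD (_ : (E * r k + A * 0) * (E * r k + B * 0) - (0 ^+ 2 - E ^+ 2 * D' * 1 ^+ 2)
        = E ^+ 2 * (r k ^+ 2 - - D')); last by ring.
    exact: dvdz_mull.
- exists t0, (zadd t0 (zmul (zcst A) (zcst 0))).
  split; first by constructor 1.
  split => //; split => //.
  exists (zcst 1), (zcst 0), (zcst 1); split; first by split; rewrite ?is_zp_cst.
  split.
    case=> h1 _ _; apply: (nz_cst pp (n := 1)) h1 => //.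
  apply: zp_eqP => k; rewrite /zadd /zmul /zcst.
  by rewrite (_ : (E * r k + A * 0) * 1 ^+ 2 - (E * r k * 1 ^+ 2 + (E * r k + A * 0) * D * 0 ^+ 2) = 0) ?dvdz0 //; ring.
Qed.

Lemma prime_dvdzM (p : nat) (a b : int) : prime p -> (p%:Z %| a * b)%Z -> (p%:Z %| a)%Z || (p%:Z %| b)%Z.
Proof. by move=> pp; rewrite !dvdzE abszM /= Euclid_dvdM. Qed.

Lemma case3 (p e : nat) (D A B D' c : int) (al w zz yy : zseq) : prime p ->
  D = (expn p e)%:Z ^+ 2 * D' ->
  is_zp p al -> is_zp p w -> is_zp p zz -> is_zp p yy ->
  (forall k, ((expn p k)%:Z %| D' * w k ^+ 2 -
      ((D' * al k ^+ 2 + (c + (c + A) * (c + B))) ^+ 2 - 4 * c * ((c + A) * (c + B))))%Z) ->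
  (forall k, ~~ (p%:Z %| 2 * D' * al k)%Z) ->
  ~~ (p%:Z %| c + A)%Z ->
  (forall k, ((expn p k)%:Z %| zz k ^+ 2 - (c + A) - D' * yy k ^+ 2)%Z) ->
  GOAL p D A B.
Proof.
move=> pp eD hal hw hzz hyy hH hu hk hhil.
set E := (expn p e)%:Z.
have E0 : E != 0 by rewrite /E -[0]/(0%N%:Z) eqz_nat -lt0n expn_gt0 prime_gt0.
set Q := (c + A) * (c + B).
set L := c - Q.
pose t1 := zmul (zcst (E * 2 * D')) al.
pose t0 := zmul (zcst c) t1.
pose t2 := zmul (zcst (E * D')) w.
pose t3 := zadd (zcst L) (zmul (zcst (- D')) (zmul al al)).
pose t4 := zadd (zcst L) (zmul (zcst D') (zmul al al)).
pose gA := zadd t0 (zmul (zcst A) t1).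
have nz1 : ~ zp_zero p t1.
  by apply: (nz_scaled (e := e) (u := fun k => 2 * D' * al k) pp) => // k; rewrite /t1 /zmul /zcst; ring.
have nzg : ~ zp_zero p gA.
  apply: (nz_scaled (e := e) (u := fun k => (2 * D' * al k) * (c + A)) pp).
    by move=> k; rewrite /gA /t0 /t1 /zadd /zmul /zcst; ring.
  by move=> k; apply/negP => /(prime_dvdzM pp) /orP [] h; [move: (hu k)|move: hk]; rewrite h.
have i1 : is_zp p t1 by apply: is_zp_mul; [apply: is_zp_cst|].
have iaa : is_zp p (zmul al al) by apply: is_zp_mul.
exists t0, t1, t2, t3, t4.
split; [split; [|split]|].
- split; rewrite /t0 /t2 /t3 /t4; try apply: is_zp_mul; try apply: is_zp_add;
    try apply: is_zp_mul; rewrite ?is_zp_cst //.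
- by case.
- split; apply: zp_eqP => k; rewrite /t0 /t1 /t2 /t3 /t4 /zadd /zmul /zcst eD.
  + rewrite (_ : c * (E * 2 * D' * al k) * (E * 2 * D' * al k) -
      ((E * D' * w k) ^+ 2 - E ^+ 2 * D' * (L + - D' * (al k * al k)) ^+ 2)
      = - (E ^+ 2 * D') * (D' * w k ^+ 2 -
      ((D' * al k ^+ 2 + (c + (c + A) * (c + B))) ^+ 2 - 4 * c * ((c + A) * (c + B)))));
      last by rewrite /L /Q; ring.
    exact: dvdz_mull.
  + rewrite (_ : (c * (E * 2 * D' * al k) + A * (E * 2 * D' * al k)) *
      (c * (E * 2 * D' * al k) + B * (E * 2 * D' * al k)) -
      ((E * D' * w k) ^+ 2 - E ^+ 2 * D' * (L + D' * (al k * al k)) ^+ 2)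
      = - (E ^+ 2 * D') * (D' * w k ^+ 2 -
      ((D' * al k ^+ 2 + (c + (c + A) * (c + B))) ^+ 2 - 4 * c * ((c + A) * (c + B)))));
      last by rewrite /L /Q; ring.
    exact: dvdz_mull.
- exists t1, gA.
  split; first by constructor 2.
  split => //; split => //.
  exists (zcst (E * (c + A))), yy, (zmul (zcst E) zz).
  split; first by split; rewrite ?is_zp_cst //; apply: is_zp_mul; rewrite ?is_zp_cst.
  split.
    case=> h1 _ _; apply: (nz_cst pp (n := E * (c + A))) h1 => //.
    rewrite mulf_neq0 //; apply: contra hk => /eqP ->; exact: dvdz0.
  apply: zp_eqP => k; rewrite /gA /t0 /t1 /zadd /zmul /zcst eD.
  rewrite (_ : (c * (E * 2 * D' * al k) + A * (E * 2 * D' * al k)) * (E * zz k) ^+ 2 -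
     (E * 2 * D' * al k * (E * (c + A)) ^+ 2 +
      (c * (E * 2 * D' * al k) + A * (E * 2 * D' * al k)) * (E ^+ 2 * D') * yy k ^+ 2)
     = (E * 2 * D' * al k * (c + A) * E ^+ 2) * (zz k ^+ 2 - (c + A) - D' * yy k ^+ 2)); last by ring.
  exact: dvdz_mull.
Qed.

Lemma decomp (p : nat) (D : int) : prime p -> D != 0 -> unramified_QsqrtD p D ->
  exists e D', D = (expn p e)%:Z ^+ 2 * D' /\ ~~ (p%:Z %| D')%Z.
Proof.
move=> pp D0 un.
have n0 : (0 < `|D|)%N by rewrite absz_gt0.
have [n' cop en] := pfactor_coprime pp n0.
have ev : ~~ odd (logn p `|D|).
  apply/negP => hodd; move: un; rewrite /unramified_QsqrtD => /negP; apply.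
  have hp : p \in primes `|D| by rewrite -logn_gt0; case: (logn p `|D|) hodd.
  have hdiv : (p %| \prod_(q <- primes `|D| | odd (logn q `|D|)) q)%N.
    by rewrite (big_rem _ hp) hodd dvdn_mulr.
  have hsq : (p%:Z %| sqfree_part D)%Z.
    by rewrite /sqfree_part; apply: dvdz_mull; rewrite dvdzE.
  by rewrite /quad_disc; case: ifP => _ //; apply: dvdz_mull.
set l := logn p `|D| in en ev *.
exists l./2, (sgz D * n'%:Z); split.
  rewrite {1}[D]intEsg en PoszM.
  have -> : expn p l = expn (expn p l./2) 2.
    by rewrite -expnM muln2 even_halfK.
  rewrite -[(expn (expn p _) 2)%:Z]natz natrX natz; ring.
apply/negP => /(prime_dvdzM pp) /orP [].
  rewrite dvdzE (_ : (`|sgz D|)%N = 1%N); last by case: (sgzP D) D0; rewrite ?eqxx.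
  rewrite dvdn1 /= => /eqP p1.
  by move: (prime_gt1 pp); rewrite p1.
by rewrite dvdzE /= => h; move: cop; rewrite prime_coprime // h.
Qed.

Lemma unit_of (p : nat) (s r0 : int) : (p%:Z %| s - r0)%Z -> ~~ (p%:Z %| r0)%Z -> ~~ (p%:Z %| s)%Z.
Proof.
move=> h1 h2; apply: contra h2 => h3.
by rewrite (_ : r0 = s - (s - r0)); [apply: rpredB | ring].
Qed.

Lemma hensel_c (p : nat) (a c r0 : int) : prime p -> ~~ (p%:Z %| 2*a*r0)%Z -> (p%:Z %| a*r0^+2 - c)%Z ->
  exists s : zseq, is_zp p s /\ (forall k, ((expn p k)%:Z %| a * s k ^+ 2 - c)%Z)
     /\ (forall k, ~~ (p%:Z %| s k)%Z).
Proof.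
move=> pp hu h1.
have [s [hs [hk hr]]] := hensel pp (is_zp_cst p c) hu h1.
exists s; split => //; split => // k.
apply: unit_of (hr k) _; apply: contra hu => h; exact: dvdz_mull.
Qed.

Lemma p_not2 (p : nat) : prime p -> p != 2%N -> phi p 2 != 0.
Proof.
move=> pp p2; rewrite phi0 // dvdzE /=; apply/negP => h.
have := dvdn_leq (isT : (0 < 2)%N) h; have := prime_gt1 pp.
by move: p2; case: p {pp h} => [|[|[|]]].
Qed.

Ltac phis := rewrite ?(phiD, phiM, phiB, phiN, phiX, phi1, phi2).

Unset Implicit Arguments.

Theorem lemma3p1 (D A B : int) (p : nat) :
  ~ is_square_int D ->
  S_smooth A B ->
  prime p -> p != 2%N ->
  unramified_QsqrtD p D ->
  exists t0 t1 t2 t3 t4 : zseq,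
    S_point_Qp p D A B t0 t1 t2 t3 t4 /\ ev_alpha_zero p D A B t0 t1.
Proof.
move=> nsq [AB0 _ _] pp p2 un; change (GOAL p D A B).
have D0 : D != 0 by apply/eqP => e; apply: nsq; exists 0; rewrite e expr2 mulr0.
have A0 : A != 0 by apply: contra AB0 => /eqP ->; rewrite mul0r.
have [e [D' [eD hD']]] := decomp pp D0 un.
have h2 : (2 : 'F_p) != 0 by rewrite -(phi2 p); exact: p_not2 pp p2.
have hD'F : phi p D' != 0 by rewrite phi0.
case: (boolP [exists x : 'F_p, x ^+ 2 == phi p D']).
  case/existsP => x /eqP hx; have [r0 er0] := phi_surj x.
  have hu : ~~ (p%:Z %| 2 * 1 * r0)%Z.
    rewrite -phi0 //; phis; rewrite er0 mulr1 mulf_neq0 //.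
    by apply: contra hD'F => /eqP h; rewrite -hx h expr2 mulr0.
  have h1 : (p%:Z %| 1 * r0 ^+ 2 - D')%Z by rewrite -phi0 //; phis; rewrite er0 mul1r hx subrr.
  have [d [hd [hdk _]]] := hensel_c pp hu h1.
  have hdk' : forall k, ((expn p k)%:Z %| d k ^+ 2 - D')%Z.
    by move=> k; rewrite -[d k ^+ 2]mul1r; exact: hdk.
  exact: (case1 B pp A0 D0 eD hd hdk').
move=> nsq1.
case: (boolP [exists x : 'F_p, x ^+ 2 == phi p (- D')]).
  case/existsP => x /eqP hx; have [r0 er0] := phi_surj x.
  have hu : ~~ (p%:Z %| 2 * 1 * r0)%Z.
    rewrite -phi0 //; phis; rewrite er0 mulr1 mulf_neq0 //.
    by apply: contra hD'F => /eqP h; move: hx; rewrite h expr2 mulr0 phiN => /eqP; rewrite eq_sym oppr_eq0.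
  have h1 : (p%:Z %| 1 * r0 ^+ 2 - - D')%Z by rewrite -phi0 //; phis; rewrite er0 mul1r hx phiN subrr.
  have [r [hr [hrk hru]]] := hensel_c pp hu h1.
  have hrk' : forall k, ((expn p k)%:Z %| r k ^+ 2 - - D')%Z.
    by move=> k; rewrite -[r k ^+ 2]mul1r; exact: hrk.
  exact: (case2 A B pp eD hr hrk' hru).
move=> nsq2.
have nsqF : forall x : 'F_p, x ^+ 2 != phi p D'.
  by move=> x; apply: contra nsq1 => h; apply/existsP; exists x.
have p3 : (3 < p)%N.
  have cardF := card_Fp pp.
  case: (eqVneq p 3) => [e3|n3].
    exfalso; have c3 : #|'F_p| = 3%N by rewrite cardF e3.
    case: (card3 c3 h2 hD'F) => [[x hx]|[x hx]].
      by move: (nsqF x); rewrite hx eqxx.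
    by move: nsq2 => /existsP; apply; exists x; rewrite hx phiN.
  have := prime_gt1 pp; move: p2 n3; clear; lia.
have c4 : (3 < #|'F_p|)%N by rewrite card_Fp.
have [y hy] := avoid3 (0 : 'F_p) (phi p (- A)) (phi p (- B)) c4.
have [c ec] := phi_surj y.
move: hy; rewrite -ec !phiN => /and3P [hc0 hcA hcB].
have hcA' : phi p (c + A) != 0 by rewrite phiD -[phi p A]opprK subr_eq0.
have hcB' : phi p (c + B) != 0 by rewrite phiD -[phi p B]opprK subr_eq0.
set Q := (c + A) * (c + B).
set Si := c + Q.
set mi := 4 * c * Q.
have hm : phi p mi != 0.
  rewrite /mi (_ : (4 : int) = 2 * 2); last by rewrite -natrM.
  phis.
  by rewrite /Q; phis; rewrite !mulf_neq0 // -?phiD.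
have hS : exists z : 'F_p, phi p Si ^+ 2 - phi p mi = z ^+ 2.
  exists (phi p (c - Q)); rewrite -!phiX -phiB; congr phi.
  by rewrite /Si /mi; ring.
have [a [w [a0 ea]]] := mainF h2 nsqF hm hS.
have [al0 eal0] := phi_surj a; have [w0 ew0] := phi_surj w.
have [zz [yy [hzz [hyy hzy]]]] : exists zz yy : zseq, is_zp p zz /\ is_zp p yy /\
    (forall k, ((expn p k)%:Z %| zz k ^+ 2 - (c + A) - D' * yy k ^+ 2)%Z).
  have [x [v ex]] := rep2 0 (phi p c + phi p A) (oner_neq0 _) hD'F.
  have [z0 ez0] := phi_surj x; have [y0 ey0] := phi_surj v.
  case: (eqVneq x 0) => [x0|xn0].
    have v0 : v != 0.
      by apply: contra hcA' => /eqP v0; rewrite phiD; move: ex; rewrite x0 v0 expr2 !mulr0 add0r addr0 => <-.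
    have hu : ~~ (p%:Z %| 2 * D' * y0)%Z by rewrite -phi0 //; phis; rewrite ey0 !mulf_neq0.
    have h1 : (p%:Z %| D' * y0 ^+ 2 - - (c + A))%Z.
      by rewrite -phi0 //; phis; rewrite ey0 opprK addrC -ex x0 expr2 !mulr0 add0r.
    have [s [hs [hsk _]]] := hensel_c pp hu h1.
    exists (zcst 0), s; split; first exact: is_zp_cst.
    split => // k; rewrite /zcst.
    by rewrite (_ : 0 ^+ 2 - (c + A) - D' * s k ^+ 2 = - (D' * s k ^+ 2 - - (c + A))); [rewrite rpredN | ring].
  have hu : ~~ (p%:Z %| 2 * 1 * z0)%Z by rewrite -phi0 //; phis; rewrite ez0 mulr1 !mulf_neq0.
  have h1 : (p%:Z %| 1 * z0 ^+ 2 - ((c + A) + D' * y0 ^+ 2))%Z.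
    by rewrite -phi0 //; phis; rewrite ez0 ey0 -ex add0r subrr.
  have [s [hs [hsk _]]] := hensel_c pp hu h1.
  exists s, (zcst y0); split => //; split; first exact: is_zp_cst.
  move=> k; rewrite /zcst.
  by rewrite (_ : s k ^+ 2 - (c + A) - D' * y0 ^+ 2 = 1 * s k ^+ 2 - ((c + A) + D' * y0 ^+ 2)) //; ring.
have ea' : phi p (D' * w0 ^+ 2) = phi p ((D' * al0 ^+ 2 + Si) ^+ 2 - mi).
  move: ea; rewrite -eal0 -ew0; phis => e1; rewrite -e1; ring.
have key : (p%:Z %| D' * w0 ^+ 2 - ((D' * al0 ^+ 2 + Si) ^+ 2 - mi))%Z.
  by rewrite -phi_eq //; apply/eqP; exact: ea'.
have [al [ws [hal [hws [hH hu]]]]] : exists al ws : zseq, is_zp p al /\ is_zp p ws /\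
   (forall k, ((expn p k)%:Z %| D' * ws k ^+ 2 - ((D' * al k ^+ 2 + Si) ^+ 2 - mi))%Z) /\
   (forall k, ~~ (p%:Z %| 2 * D' * al k)%Z).
  case: (eqVneq w 0) => [w0e|w0n].
    set u0 := D' * al0 ^+ 2 + Si.
    have hu0 : (p%:Z %| 1 * u0 ^+ 2 - mi)%Z.
      rewrite -phi0 // mul1r /u0 -ea' phiM phiX ew0 w0e.
      by rewrite expr2 !mulr0.
    have u0n : ~~ (p%:Z %| 2 * 1 * u0)%Z.
      rewrite -phi0 // phiM phiM phi1 mulr1 mulf_neq0 //; apply: contra hm => /eqP h.
      by move: hu0; rewrite -phi0 // phiB phiM phi1 phiX h expr2 !mulr0 sub0r oppr_eq0.
    have [R [hR [hRk hRu]]] := hensel pp (is_zp_cst p mi) u0n hu0.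
    have hiR : is_zp p (zadd R (zcst (- Si))) by apply: is_zp_add => //; apply: is_zp_cst.
    have hua : ~~ (p%:Z %| 2 * D' * al0)%Z by rewrite -phi0 //; phis; rewrite eal0 !mulf_neq0.
    have h1a : (p%:Z %| D' * al0 ^+ 2 - zadd R (zcst (- Si)) 1%N)%Z.
      rewrite /zadd /zcst (_ : D' * al0 ^+ 2 - (R 1%N + - Si) = - (R 1%N - u0)); last by rewrite /u0; ring.
      by rewrite rpredN.
    have [als [hals [halk halu]]] := hensel pp hiR hua h1a.
    exists als, (zcst 0); split => //; split; first exact: is_zp_cst.
    split.
      move=> k; rewrite /zcst.
      have h3 := halk k; have h4 := hRk k; rewrite /zadd /zcst in h3 h4.
      rewrite (_ : D' * 0 ^+ 2 - ((D' * als k ^+ 2 + Si) ^+ 2 - mi) =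
          - ((D' * als k ^+ 2 - (R k + - Si)) * (D' * als k ^+ 2 + Si + R k) + (1 * R k ^+ 2 - mi)));
        last by ring.
      by rewrite rpredN; apply: rpredD => //; apply: dvdz_mulr.
    move=> k; apply: unit_of (_ : (p%:Z %| 2 * D' * als k - 2 * D' * al0)%Z) hua.
    by rewrite (_ : 2 * D' * als k - 2 * D' * al0 = 2 * D' * (als k - al0)); [apply: dvdz_mull | ring].
  have hu : ~~ (p%:Z %| 2 * D' * w0)%Z by rewrite -phi0 //; phis; rewrite ew0 !mulf_neq0.
  have [s [hs [hsk _]]] := hensel_c pp hu key.
  exists (zcst al0), s; split; first exact: is_zp_cst.
  split => //; split => // k.
  by rewrite /zcst -phi0 //; phis; rewrite eal0 !mulf_neq0.
have hcA'' : ~~ (p%:Z %| c + A)%Z by rewrite -phi0.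
exact: (case3 pp eD hal hws hzz hyy hH hu hcA'').
Qed.
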